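(* Consider the problem $\mathbf{x}^\star(t)=\arg\min_{\mathbf{x}\in\mathbb{R}^n} f_0(\mathbf{x},t)$ s.t. $f_i(\mathbf{x},t)\le0$, $i=1,\dots,p$, for $t\in[0,\infty)$, under Assumptions 1, 2, 3 below. Let $\mathbf{x}_0\in\mathbb{R}^n$ be arbitrary, let $s_0$ be given by $$s_0=\begin{cases}0 & \text{if } \max_i f_i(\mathbf{x}_0,0)\le 0,\\ \max_i f_i(\mathbf{x}_0,0)+\varepsilon & \text{if } \max_i f_i(\mathbf{x}_0,0)>0,\end{cases}$$ for some $\varepsilon>0$, and let $s(t)=s_0e^{-\alpha t}$ for some $\alpha>0$. Let $c:[0,\infty)\to(0,\infty)$ be continuously differentiable with $c(t)\to\infty$ as $t\to\infty$. Let $\mathbf{P}\in\mathbb{S}^n_{++}$ with $\mathbf{P}\succeq\sigma\mathbf{I}_n$, $\sigma>0$, and let $\tilde{\mathbf{z}}(t)$ solve $$\dot{\tilde{\mathbf{z}}}(t)=-\nabla_{\mathbf{x}\mathbf{x}}\tilde\Phi(\tilde{\mathbf{z}}(t),t)^{-1}\big(\mathbf{P}\nabla_{\mathbf{x}}\tilde\Phi(\tilde{\mathbf{z}}(t),t)+\nabla_{\mathbf{x}t}\tilde\Phi(\tilde{\mathbf{z}}(t),t)\big),\qquad\tilde{\mathbf{z}}(0)=\mathbf{x}_0,$$ where $\tilde\Phi(\mathbf{x},t)=f_0(\mathbf{x},t)-\frac{1}{c(t)}\sum_{i=1}^p\log(s(t)-f_i(\mathbf{x},t))$ on $\tilde{\mathcal{D}}(t)=\{\mathbf{x}: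 f_i(\mathbf{x},t)<s(t),\ i=1,\dots,p\}$. Then $\tilde{\mathbf{z}}(t)-\mathbf{x}^\star(t)\to 0$ as $t\to\infty$.
   Context: Assumption 1: $f_0(\mathbf{x},t)$ and $f_i(\mathbf{x},t)$, $i=1,\dots,p$, are twice continuously differentiable in $\mathbf{x}$ and continuously differentiable in $t$ for $t\ge0$; $\nabla_{\mathbf{x}\mathbf{x}} f_0(\mathbf{x},t)\succeq m\mathbf{I}$ for some $m>0$; each $f_i(\cdot,t)$ is convex for all $t\ge0$. Assumption 2 (Slater): there exists $\mathbf{x}^\dagger\in\mathbb{R}^n$ with $f_i(\mathbf{x}^\dagger,t)<0$ for all $i$ and all $t\ge0$. Optimal dual variables $\lambda^\star(t)=(\lambda_1^\star(t),\dots,\lambda_p^\star(t))$ satisfy with $\mathbf{x}^\star(t)$ the KKT conditions: $\nabla_{\mathbf{x}} f_0(\mathbf{x}^\star(t),t)+\sum_i\lambda_i^\star(t)\nabla_{\mathbf{x}} f_i(\mathbf{x}^\star(t),t)=0$, $\lambda_i^\star(t)f_i(\mathbf{x}^\star(t),t)=0$, $\lambda_i^\star(t)\ge0$, $f_i(\mathbf{x}^\star(t),t)\le0$. Assumption 3: for every $\alpha>0$, $\lambda_i^\star(t)e^{-\alpha t}\to0$ as $t\to\infty$ for all $i$. The solution $\tilde{\mathbf{z}}(t)$ is assumed to exist and remain in $\tilde{\mathcal{D}}(t)$ for all $t\ge0$. *)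

(* Defs.v *)
From Stdlib Require Import Reals.
From mathcomp Require Import ssreflect ssrfun ssrbool eqtype ssrnat fintype bigop.
Set Implicit Arguments. Unset Strict Implicit.
Open Scope R_scope.

Definition vec (n : nat) := 'I_n -> R.

Definition isum {n : nat} (F : 'I_n -> R) : R := \big[Rplus/0]_(i < n) F i.

Definition setc {n : nat} (x : vec n) (i : 'I_n) (y : R) : vec n :=
  fun j => if j == i then y else x j.

Definition near {n : nat} (x y : vec n) (d : R) : Prop :=
  forall i, Rabs (y i - x i) < d.

Definition pd {n : nat} (F : vec n -> R) (i : 'I_n) (x : vec n) (l : R) : Prop :=
  derivable_pt_lim (fun y => F (setc x i y)) (x i) l.

Definition grad {n : nat} (F : vec n -> R) (x : vec n) (g : vec n) : Prop :=
  forall i, pd F i x (g i).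

Definition hess {n : nat} (F : vec n -> R) (x : vec n) (H : 'I_n -> 'I_n -> R) : Prop :=
  exists (DF : 'I_n -> vec n -> R) (d : R), 0 < d /\
    (forall j y, near x y d -> pd F j y (DF j y)) /\
    (forall i j, pd (DF j) i x (H i j)).

Definition dxt {n : nat} (Phi : vec n -> R -> R) (x : vec n) (t : R) (m : vec n) : Prop :=
  exists (G : 'I_n -> R -> R) (d : R), 0 < d /\
    (forall j s, Rabs (s - t) < d -> pd (fun y => Phi y s) j x (G j s)) /\
    (forall j, derivable_pt_lim (G j) t (m j)).

Definition jcont {n : nat} (F : vec n -> R -> R) : Prop :=
  forall x t, 0 <= t -> forall e, 0 < e -> exists d, 0 < d /\
    forall y s, 0 <= s -> near x y d -> Rabs (s - t) < d -> Rabs (F y s - F x t) < e.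

(* Assumption 1 regularity: twice continuously differentiable in x, continuously
   differentiable in t, for t >= 0 (via continuous partial derivatives; the
   t-derivative is required for t > 0 and to extend continuously to t = 0). *)
Definition C2x_C1t {n : nat} (F : vec n -> R -> R) : Prop :=
  exists (DF : 'I_n -> vec n -> R -> R) (D2F : 'I_n -> 'I_n -> vec n -> R -> R)
         (DtF : vec n -> R -> R),
    (forall x t i, 0 <= t -> pd (fun y => F y t) i x (DF i x t)) /\
    (forall x t i j, 0 <= t -> pd (fun y => DF j y t) i x (D2F i j x t)) /\
    (forall x t, 0 < t -> derivable_pt_lim (fun s => F x s) t (DtF x t)) /\
    jcont F /\ (forall i, jcont (DF i)) /\ (forall i j, jcont (D2F i j)) /\
    jcont DtF.

Definition qform {n : nat} (A : 'I_n -> 'I_n -> R) (v : vec n) : R :=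
  isum (fun i => isum (fun j => v i * A i j * v j)).
Definition sqnorm {n : nat} (v : vec n) : R := isum (fun i => v i * v i).

Definition convex_fun {n : nat} (F : vec n -> R) : Prop :=
  forall x y (l : R), 0 <= l <= 1 ->
    F (fun k => l * x k + (1 - l) * y k) <= l * F x + (1 - l) * F y.

Definition is_argmin {n p : nat} (f0 : vec n -> R -> R) (fc : 'I_p -> vec n -> R -> R)
    (t : R) (x : vec n) : Prop :=
  (forall i, fc i x t <= 0) /\
  (forall y, (forall i, fc i y t <= 0) -> f0 x t <= f0 y t).

Definition Phit {n p : nat} (f0 : vec n -> R -> R) (fc : 'I_p -> vec n -> R -> R)
    (c s : R -> R) (x : vec n) (t : R) : R :=
  f0 x t - / c t * isum (fun i => ln (s t - fc i x t)).

(* Main.v *)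
Require Import Defs.
From Stdlib Require Import Reals Lra FunctionalExtensionality IndefiniteDescription.
From HB Require Import structures.
From mathcomp Require Import ssreflect ssrfun ssrbool eqtype ssrnat seq fintype bigop.
Open Scope R_scope.

HB.instance Definition _ := Monoid.isComLaw.Build R 0 Rplus
  (fun a b c => esym (Rplus_assoc a b c)) Rplus_comm Rplus_0_l.

Section Isum.
Context {n : nat}.
Implicit Types f g : 'I_n -> R.

Lemma isum_ext f g : (forall i, f i = g i) -> isum f = isum g.
Proof. by move=> H; rewrite /isum; apply: eq_bigr. Qed.

Lemma isumD f g : isum (fun i => f i + g i) = isum f + isum g.
Proof. by rewrite /isum big_split. Qed.

Lemma isum_scal a f : isum (fun i => a * f i) = a * isum f.
Proof.
rewrite /isum; elim/big_rec2: _ => [|i y1 y2 _ ->]; first by rewrite Rmult_0_r.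
by rewrite Rmult_plus_distr_l.
Qed.

Lemma isumN f : isum (fun i => - f i) = - isum f.
Proof.
rewrite (isum_ext (fun i => - f i) (fun i => (-1) * f i)); last by move=> i; ring.
rewrite isum_scal; ring.
Qed.

Lemma isumB f g : isum (fun i => f i - g i) = isum f - isum g.
Proof. by rewrite /Rminus isumD isumN. Qed.

Lemma isum_le f g : (forall i, f i <= g i) -> isum f <= isum g.
Proof.
move=> H; rewrite /isum; elim/big_rec2: _ => [|i y1 y2 _ Hy]; first lra.
by apply: Rplus_le_compat.
Qed.

Lemma isum_const c : isum (fun _ : 'I_n => c) = INR n * c.
Proof.
rewrite /isum big_const card_ord.
elim: n => [|k IH] /=; first ring.
rewrite IH; case: k {IH} => [|k] /=; ring.
Qed.

Lemma Rabs_isum f : Rabs (isum f) <= isum (fun i => Rabs (f i)).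
Proof.
rewrite /isum; elim/big_rec2: _ => [|i y1 y2 _ Hy]; first by rewrite Rabs_R0; lra.
apply: Rle_trans (Rabs_triang _ _) _; lra.
Qed.

Lemma isum_ge0 f : (forall i, 0 <= f i) -> 0 <= isum f.
Proof.
move=> H; have := isum_le (fun _ => 0) f H.
by rewrite isum_const Rmult_0_r.
Qed.

Lemma isum_single f i : (forall j, 0 <= f j) -> f i <= isum f.
Proof.
move=> H; rewrite /isum (bigD1 i) //=.
set S := bigop _ _ _.
have : 0 <= S.
  rewrite /S; elim/big_rec: _ => [|j y _ Hy]; first lra.
  by have := H j; lra.
lra.
Qed.

Lemma isum_swap (F : 'I_n -> 'I_n -> R) :
  isum (fun i => isum (fun j => F i j)) = isum (fun j => isum (fun i => F i j)).
Proof. by rewrite /isum exchange_big. Qed.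

Lemma isum_der (f : 'I_n -> R -> R) (l : 'I_n -> R) x :
  (forall i, derivable_pt_lim (f i) x (l i)) ->
  derivable_pt_lim (fun y => isum (fun i => f i y)) x (isum l).
Proof.
move=> H; rewrite /isum; elim: (index_enum _) => [|a r IH].
  have -> : (fun y => \big[Rplus/0]_(i <- [::]) f i y) = fun _ => 0.
    by apply: functional_extensionality => y; rewrite big_nil.
  rewrite big_nil; exact: derivable_pt_lim_const.
have -> : (fun y => \big[Rplus/0]_(i <- a :: r) f i y) =
          fun y => f a y + \big[Rplus/0]_(i <- r) f i y.
  by apply: functional_extensionality => y; rewrite big_cons.
rewrite big_cons; exact: (derivable_pt_lim_plus (f a) _ x _ _ (H a) IH).
Qed.

End Isum.

Lemma fin_delta n (P : 'I_n -> R -> Prop) :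
  (forall i d d', 0 < d' <= d -> P i d -> P i d') ->
  (forall i, exists d, 0 < d /\ P i d) -> exists d, 0 < d /\ forall i, P i d.
Proof.
move=> Hm H.
suff [d [Hd Hr]] : exists d, 0 < d /\ forall i, i \in enum 'I_n -> P i d.
  by exists d; split => // i; apply: Hr; rewrite mem_enum.
elim: (enum 'I_n) => [|a r [d [Hd Hr]]]; first by exists 1; split => //; lra.
have [da [Hda Pa]] := H a.
exists (Rmin d da); split; first by apply: Rmin_pos.
move=> i; rewrite in_cons => /orP [/eqP -> | Hi].
  apply: (Hm a da) => //; split; [apply: Rmin_pos => // | apply: Rmin_r].
apply: (Hm i d); last by apply: Hr.
split; [apply: Rmin_pos => // | apply: Rmin_l].
Qed.

Lemma fin_T n (P : 'I_n -> R -> Prop) :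
  (forall i T T', T <= T' -> P i T -> P i T') ->
  (forall i, exists T, P i T) -> exists T, forall i, P i T.
Proof.
move=> Hm H.
suff [T Hr] : exists T, forall i, i \in enum 'I_n -> P i T.
  by exists T => i; apply: Hr; rewrite mem_enum.
elim: (enum 'I_n) => [|a r [T Hr]]; first by exists 0.
have [Ta Pa] := H a.
exists (Rmax T Ta) => i; rewrite in_cons => /orP [/eqP -> | Hi].
  apply: (Hm a Ta) => //; apply: Rmax_r.
apply: (Hm i T); [apply: Rmax_l | by apply: Hr].
Qed.

Lemma setc_same n (x : vec n) i : setc x i (x i) = x.
Proof. apply: functional_extensionality => j; rewrite /setc; by case: eqP => [->|]. Qed.

Lemma setc_setc n (x : vec n) i a b : setc (setc x i a) i b = setc x i b.
Proof. apply: functional_extensionality => j; rewrite /setc; by case: eqP. Qed.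

Lemma setc_comm n (x : vec n) i j a b : i <> j ->
  setc (setc x i a) j b = setc (setc x j b) i a.
Proof.
move=> Hij; apply: functional_extensionality => k; rewrite /setc.
case: (k =P j) => [Hkj|Hkj]; case: (k =P i) => [Hki|Hki] //.
by exfalso; apply: Hij; rewrite -Hki -Hkj.
Qed.

Lemma setc_eq n (x : vec n) i a : setc x i a i = a.
Proof. by rewrite /setc eqxx. Qed.

Lemma setc_neq n (x : vec n) i j a : j <> i -> setc x i a j = x j.
Proof. by rewrite /setc => /eqP /negbTE ->. Qed.

Lemma near_le n (x y : vec n) d d' : d <= d' -> near x y d -> near x y d'.
Proof. move=> H Hn i; have := Hn i; lra. Qed.

Lemma near_refl n (x : vec n) d : 0 < d -> near x x d.
Proof. move=> H i; rewrite Rminus_diag Rabs_R0; lra. Qed.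

Lemma der_eq f x l l' : derivable_pt_lim f x l -> l = l' -> derivable_pt_lim f x l'.
Proof. by move=> H <-. Qed.

Lemma der_local f g x l d : 0 < d -> (forall y, Rabs (y - x) < d -> f y = g y) ->
  derivable_pt_lim f x l -> derivable_pt_lim g x l.
Proof.
move=> Hd Heq H e He; have [del Hdel] := H e He.
have Hp : 0 < Rmin del d by apply: Rmin_pos => //; apply: cond_pos.
exists (mkposreal _ Hp) => h Hh0 Hh /=.
have H1 : Rabs h < del by apply: Rlt_le_trans Hh (Rmin_l _ _).
have H2 : Rabs h < d by apply: Rlt_le_trans Hh (Rmin_r _ _).
have E1 : f (x + h) = g (x + h) by apply: Heq; have -> : x + h - x = h by ring.
have E2 : f x = g x by apply: Heq; rewrite Rminus_diag Rabs_R0; lra.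
rewrite -E1 -E2; by apply: Hdel.
Qed.

Lemma mvt2 f f' a b :
  (forall c, Rmin a b <= c <= Rmax a b -> derivable_pt_lim f c (f' c)) ->
  exists c, Rmin a b <= c <= Rmax a b /\ f b - f a = f' c * (b - a).
Proof.
move=> H; case: (Rtotal_order a b) => [Hab|[Hab|Hab]].
- have E1 : Rmin a b = a by apply: Rmin_left; lra.
  have E2 : Rmax a b = b by apply: Rmax_right; lra.
  rewrite E1 E2 in H *.
  have [c [Hc1 Hc2]] := MVT_cor2 f f' a b Hab H.
  exists c; split => //; lra.
- subst; exists b; split; [split; [apply: Rmin_l| apply: Rmax_l]|ring].
- have E1 : Rmin a b = b by apply: Rmin_right; lra.
  have E2 : Rmax a b = a by apply: Rmax_left; lra.
  rewrite E1 E2 in H *.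
  have [c [Hc2 Hc1]] := MVT_cor2 f f' b a Hab H.
  exists c; split; [lra|].
  have -> : f b - f a = - (f a - f b) by ring.
  rewrite Hc2; ring.
Qed.

Lemma der_cont f x l : derivable_pt_lim f x l -> continuity_pt f x.
Proof. move=> H; apply: derivable_continuous_pt; exists l; exact: H. Qed.
Arguments near_le {n x y d d'}.
Arguments near_refl {n} x {d}.
Arguments setc_same {n} x i.
Arguments setc_setc {n} x i a b.
Arguments setc_comm {n} x i j a b.
Arguments setc_eq {n} x i a.
Arguments setc_neq {n} x i j a.
Arguments fin_delta {n} P.
Arguments fin_T {n} P.
Arguments mvt2 {f f' a b}.
Arguments der_local {f g x l d}.
Arguments der_eq {f x l l'}.
Arguments der_cont {f x l}.
Arguments isum_der {n f l x}.
Set Implicit Arguments. Unset Strict Implicit.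

Definition ctat {n} (F : vec n -> R -> R) (x : vec n) (t : R) :=
  forall e, 0 < e -> exists d, 0 < d /\
    forall y s, near x y d -> Rabs (s - t) < d -> Rabs (F y s - F x t) < e.

Lemma ct_ext n (F G : vec n -> R -> R) x t :
  (forall y s, F y s = G y s) -> ctat F x t -> ctat G x t.
Proof.
move=> E H e He; have [d [Hd Hd']] := H e He; exists d; split => // y s Hy Hs.
rewrite -!E; exact: Hd'.
Qed.

Lemma ct_const n (x : vec n) t c : ctat (fun _ _ => c) x t.
Proof. move=> e He; exists 1; split; [lra|] => y s _ _; rewrite Rminus_diag Rabs_R0; lra. Qed.

Lemma cont_eps h t : continuity_pt h t ->
  forall e, 0 < e -> exists d, 0 < d /\ forall s, Rabs (s - t) < d -> Rabs (h s - h t) < e.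
Proof.
move=> H e He; have [a [Ha Ha']] := H e He.
exists a; split => // s Hs; case: (Req_dec s t) => [->|Hst].
  by rewrite Rminus_diag Rabs_R0.
apply: (Ha' s); split; first by split => //; auto.
exact: Hs.
Qed.

Lemma ct_time n (x : vec n) t h : continuity_pt h t -> ctat (fun _ s => h s) x t.
Proof.
move=> H e He; have [d [Hd Hd']] := @cont_eps h t H e He; exists d; split => // y s _ Hs.
exact: Hd'.
Qed.

Lemma ct_jc n (F : vec n -> R -> R) x t : jcont F -> 0 < t -> ctat F x t.
Proof.
move=> H Ht e He; have [d [Hd Hd']] := H x t (Rlt_le _ _ Ht) e He.
exists (Rmin d t); split; first by apply: Rmin_pos.
move=> y s Hy Hs.
have Hs1 := Rmin_l d t; have Hs2 := Rmin_r d t.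
apply: Hd'; [| apply: near_le Hy => // | lra].
have := Rabs_def2 _ _ (Rlt_le_trans _ _ _ Hs Hs2); lra.
Qed.

Lemma ct_fix n (F : vec n -> R) x t :
  (forall e, 0 < e -> exists d, 0 < d /\ forall y, near x y d -> Rabs (F y - F x) < e) ->
  ctat (fun y _ => F y) x t.
Proof.
move=> H e He; have [d [Hd Hd']] := H e He; exists d; split => // y s Hy _; exact: Hd'.
Qed.

Lemma ct_plus n (F G : vec n -> R -> R) x t :
  ctat F x t -> ctat G x t -> ctat (fun y s => F y s + G y s) x t.
Proof.
move=> HF HG e He.
have [d1 [Hd1 H1]] := HF (e/2) ltac:(lra).
have [d2 [Hd2 H2]] := HG (e/2) ltac:(lra).
exists (Rmin d1 d2); split; first by apply: Rmin_pos.
move=> y s Hy Hs.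
have A1 := Rmin_l d1 d2; have A2 := Rmin_r d1 d2.
have := H1 y s (near_le A1 Hy) ltac:(lra); have := H2 y s (near_le A2 Hy) ltac:(lra).
have E : F y s + G y s - (F x t + G x t) = (F y s - F x t) + (G y s - G x t) by ring.
rewrite E; move=> B2 B1; apply: Rle_lt_trans (Rabs_triang _ _) _; lra.
Qed.

Lemma ct_opp n (F : vec n -> R -> R) x t : ctat F x t -> ctat (fun y s => - F y s) x t.
Proof.
move=> HF e He; have [d [Hd H]] := HF e He; exists d; split => // y s Hy Hs.
have -> : - F y s - - F x t = - (F y s - F x t) by ring.
rewrite Rabs_Ropp; exact: H.
Qed.

Lemma prod_bound a b a0 b0 eta : 0 < eta <= 1 -> Rabs (a - a0) < eta -> Rabs (b - b0) < eta ->
  Rabs (a * b - a0 * b0) <= eta * (1 + Rabs a0 + Rabs b0).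
Proof.
move=> He Ha Hb.
have -> : a * b - a0 * b0 = (a - a0) * (b - b0) + (a0 * (b - b0) + b0 * (a - a0)) by ring.
apply: Rle_trans (Rabs_triang _ _) _.
apply: Rle_trans (Rplus_le_compat_l _ _ _ (Rabs_triang _ _)) _.
rewrite !Rabs_mult.
have := Rabs_pos (a - a0); have := Rabs_pos (b - b0); have := Rabs_pos a0; have := Rabs_pos b0.
nra.
Qed.

Lemma ct_mult n (F G : vec n -> R -> R) x t :
  ctat F x t -> ctat G x t -> ctat (fun y s => F y s * G y s) x t.
Proof.
move=> HF HG e He.
set K := 1 + Rabs (F x t) + Rabs (G x t).
have HK : 0 < K by rewrite /K; have := Rabs_pos (F x t); have := Rabs_pos (G x t); lra.
set eta := Rmin 1 (e / (2 * K)).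
have He1 : 0 < e / (2 * K) by apply: Rdiv_lt_0_compat; lra.
have Heta : 0 < eta by apply: Rmin_pos; lra.
have Heta1 : eta <= 1 by apply: Rmin_l.
have Heta2 : eta <= e / (2 * K) by apply: Rmin_r.
have [d1 [Hd1 H1]] := HF eta Heta.
have [d2 [Hd2 H2]] := HG eta Heta.
exists (Rmin d1 d2); split; first by apply: Rmin_pos.
move=> y s Hy Hs.
have A1 := Rmin_l d1 d2; have A2 := Rmin_r d1 d2.
have B1 := H1 y s (near_le A1 Hy) ltac:(lra).
have B2 := H2 y s (near_le A2 Hy) ltac:(lra).
have P := @prod_bound _ _ _ _ eta (conj Heta Heta1) B1 B2.
rewrite -/K in P.
have : eta * K <= e / (2 * K) * K by apply: Rmult_le_compat_r; lra.
have -> : e / (2 * K) * K = e / 2 by field; lra.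
lra.
Qed.

Lemma inv_bound a a0 e : 0 < e -> 0 < Rabs a0 -> Rabs (a - a0) < Rabs a0 / 2 ->
  Rabs (a - a0) < e * Rabs a0 * Rabs a0 / 2 -> Rabs (/ a - / a0) < e.
Proof.
move=> He HA H1 H2.
set A := Rabs a0 in HA H1 H2 *.
have Hq : A / 2 < Rabs a.
  have T := Rabs_triang_inv a0 a.
  have E : Rabs (a0 - a) = Rabs (a - a0) by rewrite Rabs_minus_sym.
  rewrite /A in H1 T *; lra.
have Ha0 : a0 <> 0 by move=> E; rewrite /A E Rabs_R0 in HA; lra.
have Ha : a <> 0 by move=> E; rewrite E Rabs_R0 in Hq; lra.
have -> : / a - / a0 = (a0 - a) * / a * / a0 by field.
rewrite !Rabs_mult !Rabs_inv -/A -Rabs_Ropp.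
have -> : - (a0 - a) = a - a0 by ring.
set q := Rabs a in Hq *.
have Hq0 : 0 < q by lra.
have H4 : e * A * (A / 2) < e * A * q by apply: Rmult_lt_compat_l => //; nra.
have H3 : Rabs (a - a0) < e * (q * A) by nra.
have -> : Rabs (a - a0) * / q * / A = Rabs (a - a0) / (q * A) by field; lra.
apply: (Rmult_lt_reg_r (q * A)); first by nra.
have -> : Rabs (a - a0) / (q * A) * (q * A) = Rabs (a - a0) by field; lra.
lra.
Qed.

Lemma ct_inv n (F : vec n -> R -> R) x t :
  F x t <> 0 -> ctat F x t -> ctat (fun y s => / F y s) x t.
Proof.
move=> H0 HF e He.
have HA : 0 < Rabs (F x t) by apply: Rabs_pos_lt.
set eta := Rmin (Rabs (F x t) / 2) (e * Rabs (F x t) * Rabs (F x t) / 2).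
have Heta : 0 < eta.
  apply: Rmin_pos; first lra.
  apply: Rdiv_lt_0_compat; last lra.
  by apply: Rmult_lt_0_compat; [apply: Rmult_lt_0_compat|].
have [d [Hd H]] := HF eta Heta.
exists d; split => // y s Hy Hs.
have B := H y s Hy Hs.
apply: inv_bound => //.
- apply: Rlt_le_trans B (Rmin_l _ _).
- apply: Rlt_le_trans B (Rmin_r _ _).
Qed.

Lemma ct_isum n m (F : 'I_m -> vec n -> R -> R) x t :
  (forall i, ctat (F i) x t) -> ctat (fun y s => isum (fun i => F i y s)) x t.
Proof.
move=> H e He.
have Hm : 0 < INR m + 1 by have := pos_INR m; lra.
set eta := e / (INR m + 1).
have Heta : 0 < eta by apply: Rdiv_lt_0_compat.
have [d [Hd Hd']] := @fin_delta m (fun i d => forall y s, near x y d -> Rabs (s - t) < d ->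
   Rabs (F i y s - F i x t) < eta)
   (fun i d d' Hdd Hi y s Hy Hs => Hi y s (near_le (proj2 Hdd) Hy) ltac:(lra))
   (fun i => H i eta Heta).
exists d; split => // y s Hy Hs.
rewrite -isumB; apply: Rle_lt_trans (Rabs_isum _) _.
apply: Rle_lt_trans (isum_le _ (fun _ => eta) _) _.
  move=> i; apply: Rlt_le; exact: Hd'.
rewrite isum_const /eta.
have -> : INR m * (e / (INR m + 1)) = e * (INR m / (INR m + 1)) by field; lra.
have : INR m / (INR m + 1) < 1.
  apply: (Rmult_lt_reg_r (INR m + 1)) => //.
  have -> : INR m / (INR m + 1) * (INR m + 1) = INR m by field; lra.
  lra.
nra.
Qed.
Set Implicit Arguments. Unset Strict Implicit.

Definition ypart n (x w : vec n) (k : nat) : vec n :=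
  fun j => if (j < k)%N then w j else x j.

Lemma ypart0 n (x w : vec n) : ypart x w 0 = x.
Proof. by apply: functional_extensionality => j. Qed.

Lemma ypartn n (x w : vec n) : ypart x w n = w.
Proof. by apply: functional_extensionality => j; rewrite /ypart ltn_ord. Qed.

Lemma ypart_k n (x w : vec n) (k : 'I_n) : ypart x w k k = x k.
Proof. by rewrite /ypart ltnn. Qed.

Lemma ypartS n (x w : vec n) (k : 'I_n) : ypart x w k.+1 = setc (ypart x w k) k (w k).
Proof.
apply: functional_extensionality => j; rewrite /ypart /setc ltnS leq_eqVlt.
case: (j =P k) => [->|Hjk]; first by rewrite eqxx.
have -> : (nat_of_ord j == nat_of_ord k) = false.
  by apply/negbTE; apply/eqP => E; apply: Hjk; apply: val_inj.
by [].
Qed.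

Lemma between_abs a b c : Rmin a b <= c <= Rmax a b -> Rabs (c - a) <= Rabs (b - a).
Proof.
rewrite /Rmin /Rmax; case: (Rle_dec a b) => H [H1 H2];
  rewrite /Rabs; repeat case: Rcase_abs; lra.
Qed.

Lemma near_ypart n (x w : vec n) (k : 'I_n) c d :
  (forall j, Rabs (w j - x j) < d) -> Rmin (x k) (w k) <= c <= Rmax (x k) (w k) ->
  near x (setc (ypart x w k) k c) d.
Proof.
move=> Hw Hc j; rewrite /setc; case: (j =P k) => [->|_].
  by apply: Rle_lt_trans (between_abs Hc) (Hw k).
rewrite /ypart; case: (j < k)%N; first exact: Hw.
rewrite Rminus_diag Rabs_R0; have := Hw j; have := Rabs_pos (w j - x j); lra.
Qed.

Lemma tele (a : nat -> R) N : \big[Rplus/0]_(0%N <= k < N) (a k.+1 - a k) = a N - a 0%N.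
Proof.
elim: N => [|N IH]; first by rewrite big_geq //; ring.
by rewrite big_nat_recr //= IH; ring.
Qed.

Lemma isum_tele n (a : nat -> R) : isum (fun k : 'I_n => a k.+1 - a k) = a n - a 0%N.
Proof. by rewrite /isum -(big_mkord (fun _ => true) (fun k => a k.+1 - a k)) tele. Qed.

Lemma chain n (G : vec n -> R -> R) (D : 'I_n -> vec n -> R -> R) (gam : R -> vec n)
  (gd : vec n) t Gt d0 :
  0 < d0 ->
  (forall j y s, near (gam t) y d0 -> Rabs (s - t) < d0 ->
     pd (fun y => G y s) j y (D j y s)) ->
  (forall j, ctat (D j) (gam t) t) ->
  derivable_pt_lim (fun s => G (gam t) s) t Gt ->
  (forall j, derivable_pt_lim (fun u => gam u j) t (gd j)) ->
  derivable_pt_lim (fun u => G (gam u) u) t (isum (fun j => D j (gam t) t * gd j) + Gt).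
Proof.
move=> Hd0 Hpd Hct HGt Hgam e He.
set x := gam t.
have Hn : 0 < INR n + 1 by have := pos_INR n; lra.
set eta := e / (4 * (INR n + 1)).
have Heta : 0 < eta by rewrite /eta; apply: Rdiv_lt_0_compat; lra.
have [d1 [Hd1 H1]] : exists d, 0 < d /\ forall k y s, near x y d -> Rabs (s - t) < d ->
    Rabs (D k y s - D k x t) < eta / (Rabs (gd k) + 1).
  apply: (fin_delta (fun k d => forall y s, near x y d -> Rabs (s - t) < d ->
    Rabs (D k y s - D k x t) < eta / (Rabs (gd k) + 1))).
  - move=> k d d' Hdd H y s Hy Hs; apply: H; [apply: near_le Hy; lra | lra].
  - move=> k; apply: Hct; apply: Rdiv_lt_0_compat => //; have := Rabs_pos (gd k); lra.
set dd := Rmin d1 d0.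
have Hdd : 0 < dd by apply: Rmin_pos.
have Hdd1 : dd <= d1 by apply: Rmin_l.
have Hdd0 : dd <= d0 by apply: Rmin_r.
have [d2 [Hd2 H2]] : exists d, 0 < d /\ forall j h, Rabs h < d ->
    Rabs (gam (t + h) j - x j) < dd.
  apply: (fin_delta (fun j d => forall h, Rabs h < d -> Rabs (gam (t + h) j - x j) < dd)).
  - move=> j d d' Hdd' H h Hh; apply: H; lra.
  - move=> j; have [del Hdel] := Hgam j 1 Rlt_0_1.
    set B := Rabs (gd j) + 1.
    have HB : 0 < B by rewrite /B; have := Rabs_pos (gd j); lra.
    exists (Rmin del (dd / B)); split.
      by apply: Rmin_pos; [apply: cond_pos | apply: Rdiv_lt_0_compat].
    move=> h Hh; case: (Req_dec h 0) => [->|Hh0].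
      by rewrite Rplus_0_r /x Rminus_diag Rabs_R0.
    have Hh1 : Rabs h < del by apply: Rlt_le_trans Hh (Rmin_l _ _).
    have Hh2 : Rabs h < dd / B by apply: Rlt_le_trans Hh (Rmin_r _ _).
    have Hq := Hdel h Hh0 Hh1; rewrite /= in Hq.
    set q := gam (t + h) j - gam t j in Hq *.
    have Hq1 : Rabs (q / h) < B.
      have := Rabs_triang (q / h - gd j) (gd j).
      have -> : q / h - gd j + gd j = q / h by ring.
      rewrite /B; lra.
    have Eq : Rabs q = Rabs (q / h) * Rabs h.
      by rewrite -Rabs_mult; congr Rabs; field.
    have Hh3 : 0 <= Rabs h by apply: Rabs_pos.
    have : Rabs (q / h) * Rabs h <= B * Rabs h by apply: Rmult_le_compat_r; lra.
    have : B * Rabs h < B * (dd / B) by apply: Rmult_lt_compat_l.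
    have -> : B * (dd / B) = dd by field; lra.
    rewrite /x -/q Eq; lra.
have [d3 [Hd3 H3]] : exists d, 0 < d /\ forall k h, h <> 0 -> Rabs h < d ->
    Rabs ((gam (t + h) k - x k) / h - gd k) < Rmin 1 (eta / (Rabs (D k x t) + 1)).
  apply: (fin_delta (fun k d => forall h, h <> 0 -> Rabs h < d ->
    Rabs ((gam (t + h) k - x k) / h - gd k) < Rmin 1 (eta / (Rabs (D k x t) + 1)))).
  - move=> k d d' Hdd' H h Hh0 Hh; apply: H => //; lra.
  - move=> k.
    have Hp : 0 < Rmin 1 (eta / (Rabs (D k x t) + 1)).
      apply: Rmin_pos; first lra.
      apply: Rdiv_lt_0_compat => //; have := Rabs_pos (D k x t); lra.
    have [del Hdel] := Hgam k _ Hp.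
    exists del; split; first by apply: cond_pos.
    move=> h Hh0 Hh; exact: Hdel.
have He2 : 0 < e / 2 by lra.
have [d4 Hd4] := HGt (e / 2) He2.
have Hdel : 0 < Rmin (Rmin dd d2) (Rmin d3 d4).
  by apply: Rmin_pos; apply: Rmin_pos => //; apply: cond_pos.
exists (mkposreal _ Hdel) => h Hh0 Hh; rewrite /= in Hh.
have Hha : Rabs h < dd.
  by apply: Rlt_le_trans Hh _; apply: Rle_trans (Rmin_l _ _) (Rmin_l _ _).
have Hhb : Rabs h < d2.
  by apply: Rlt_le_trans Hh _; apply: Rle_trans (Rmin_l _ _) (Rmin_r _ _).
have Hhc : Rabs h < d3.
  by apply: Rlt_le_trans Hh _; apply: Rle_trans (Rmin_r _ _) (Rmin_l _ _).
have Hhd : Rabs h < d4.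
  by apply: Rlt_le_trans Hh _; apply: Rle_trans (Rmin_r _ _) (Rmin_r _ _).
set w := gam (t + h).
have Hw : forall j, Rabs (w j - x j) < dd by move=> j; apply: H2.
have Hst : Rabs (t + h - t) = Rabs h by congr Rabs; ring.
have Etel : G w (t + h) - G x (t + h) =
    isum (fun k : 'I_n => G (ypart x w k.+1) (t + h) - G (ypart x w k) (t + h)).
  by rewrite (@isum_tele n (fun k => G (ypart x w k) (t + h))) ypart0 ypartn.
have Hterm : forall k : 'I_n,
    Rabs ((G (ypart x w k.+1) (t + h) - G (ypart x w k) (t + h)) / h - D k x t * gd k)
      <= 2 * eta.
  move=> k; set Y := ypart x w k.
  have EY1 : ypart x w k.+1 = setc Y k (w k) by apply: ypartS.
  have EY0 : setc Y k (x k) = Y by rewrite -(ypart_k x w k) setc_same.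
  have Hder : forall c, Rmin (x k) (w k) <= c <= Rmax (x k) (w k) ->
      derivable_pt_lim (fun v => G (setc Y k v) (t + h)) c (D k (setc Y k c) (t + h)).
    move=> c Hc.
    have Hn1 : near (gam t) (setc Y k c) d0 by apply: near_le (near_ypart Hw Hc); lra.
    have Hs1 : Rabs (t + h - t) < d0 by rewrite Hst; lra.
    have HH := Hpd k (setc Y k c) (t + h) Hn1 Hs1.
    rewrite /pd /= setc_eq in HH.
    have E : (fun y => G (setc (setc Y k c) k y) (t + h)) = (fun v => G (setc Y k v) (t + h)).
      by apply: functional_extensionality => v; rewrite setc_setc.
    by rewrite E in HH.
  have [c [Hc Ec]] := mvt2 Hder.
  rewrite /= EY0 -EY1 in Ec.
  rewrite Ec.
  set xi := setc Y k c.
  have Hnear : near x xi dd by apply: near_ypart.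
  have HD : Rabs (D k xi (t + h) - D k x t) < eta / (Rabs (gd k) + 1).
    apply: H1; [apply: near_le Hnear; lra | rewrite Hst; lra].
  have Hq : Rabs ((w k - x k) / h - gd k) < Rmin 1 (eta / (Rabs (D k x t) + 1)).
    by apply: H3.
  set q := (w k - x k) / h in Hq.
  have -> : D k xi (t + h) * (w k - x k) / h - D k x t * gd k =
            (D k xi (t + h) - D k x t) * q + D k x t * (q - gd k).
    by rewrite /q; field.
  apply: Rle_trans (Rabs_triang _ _) _.
  rewrite (Rabs_mult _ q) (Rabs_mult (D k x t)).
  have HqB : Rabs q <= Rabs (gd k) + 1.
    have := Rabs_triang (q - gd k) (gd k).
    have -> : q - gd k + gd k = q by ring.
    have := Rmin_l 1 (eta / (Rabs (D k x t) + 1)); lra.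
  have Hr : Rabs (q - gd k) <= eta / (Rabs (D k x t) + 1).
    have := Rmin_r 1 (eta / (Rabs (D k x t) + 1)); lra.
  have HB : 0 < Rabs (gd k) + 1 by have := Rabs_pos (gd k); lra.
  have HK : 0 < Rabs (D k x t) + 1 by have := Rabs_pos (D k x t); lra.
  have T1 : Rabs (D k xi (t + h) - D k x t) * Rabs q <= eta.
    apply: Rle_trans (_ : _ <= eta / (Rabs (gd k) + 1) * (Rabs (gd k) + 1)) _.
      apply: Rmult_le_compat; try apply: Rabs_pos; lra.
    right; field; lra.
  have T2 : Rabs (D k x t) * Rabs (q - gd k) <= eta.
    apply: Rle_trans (_ : _ <= Rabs (D k x t) * (eta / (Rabs (D k x t) + 1))) _.
      apply: Rmult_le_compat_l => //; apply: Rabs_pos.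
    have -> : Rabs (D k x t) * (eta / (Rabs (D k x t) + 1)) =
              eta * (Rabs (D k x t) / (Rabs (D k x t) + 1)) by field; lra.
    have : Rabs (D k x t) / (Rabs (D k x t) + 1) <= 1.
      apply: (Rmult_le_reg_r (Rabs (D k x t) + 1)) => //.
      have -> : Rabs (D k x t) / (Rabs (D k x t) + 1) * (Rabs (D k x t) + 1) =
                Rabs (D k x t) by field; lra.
      lra.
    nra.
  lra.
have E : (G w (t + h) - G x t) / h -
         (isum (fun j => D j x t * gd j) + Gt) =
         isum (fun k : 'I_n => (G (ypart x w k.+1) (t + h) - G (ypart x w k) (t + h)) / h
                                - D k x t * gd k)
         + ((G x (t + h) - G x t) / h - Gt).
  rewrite isumB.
  rewrite (isum_ext (fun k : 'I_n => (G (ypart x w k.+1) (t + h) - G (ypart x w k) (t + h)) / h)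
     (fun k => / h * (G (ypart x w k.+1) (t + h) - G (ypart x w k) (t + h)))); last first.
    by move=> k; rewrite /Rdiv Rmult_comm.
  rewrite isum_scal -Etel; field; exact: Hh0.
rewrite /= E.
apply: Rle_lt_trans (Rabs_triang _ _) _.
have S1 : Rabs (isum (fun k : 'I_n => (G (ypart x w k.+1) (t + h) - G (ypart x w k) (t + h)) / h
                                - D k x t * gd k)) <= INR n * (2 * eta).
  apply: Rle_trans (Rabs_isum _) _.
  rewrite -isum_const; apply: isum_le; exact: Hterm.
have S2 : Rabs ((G x (t + h) - G x t) / h - Gt) < e / 2 by apply: Hd4.
have S3 : INR n * (2 * eta) < e / 2.
  rewrite /eta.
  have -> : INR n * (2 * (e / (4 * (INR n + 1)))) = e / 2 * (INR n / (INR n + 1)).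
    by field; lra.
  have : INR n / (INR n + 1) < 1.
    apply: (Rmult_lt_reg_r (INR n + 1)) => //.
    have -> : INR n / (INR n + 1) * (INR n + 1) = INR n by field; lra.
    lra.
  nra.
lra.
Qed.

From Coquelicot Require Coquelicot.
Module SchwarzAux.
Import Coquelicot.Coquelicot.

Lemma sym n (F : vec n -> R) (DF : 'I_n -> vec n -> R) (D2 : 'I_n -> 'I_n -> vec n -> R) :
  (forall i x, pd F i x (DF i x)) -> (forall i j x, pd (DF j) i x (D2 i j x)) ->
  (forall i j x e, 0 < e -> exists d, 0 < d /\
      forall y, near x y d -> Rabs (D2 i j y - D2 i j x) < e) ->
  forall i j x, D2 i j x = D2 j i x.
Proof.
move=> H1 H2 H3 i j x.
case: (i =P j) => [->|Hij]; first by [].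
have Hji : j <> i by move=> E; apply: Hij.
pose w u v := setc (setc x i u) j v.
have wi : forall u v, w u v i = u by move=> u v; rewrite /w setc_neq // setc_eq.
have wj : forall u v, w u v j = v by move=> u v; rewrite /w setc_eq.
have si : forall u v a, setc (w u v) i a = w a v.
  by move=> u v a; rewrite /w setc_comm // setc_setc.
have sj : forall u v b, setc (w u v) j b = w u b.
  by move=> u v b; rewrite /w setc_setc.
have wx : w (x i) (x j) = x by rewrite /w !setc_same.
pose f u v := F (w u v).
have d1 : forall u v, is_derive (fun z => f z v) u (DF i (w u v)).
  move=> u v; apply/is_derive_Reals; have := H1 i (w u v); rewrite /pd wi.
  have -> : (fun y => F (setc (w u v) i y)) = (fun z => f z v) by
    apply: functional_extensionality => y; rewrite si.
  by [].
have d2 : forall u v, is_derive (fun z => f u z) v (DF j (w u v)).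
  move=> u v; apply/is_derive_Reals; have := H1 j (w u v); rewrite /pd wj.
  have -> : (fun y => F (setc (w u v) j y)) = (fun z => f u z) by
    apply: functional_extensionality => y; rewrite sj.
  by [].
have d3 : forall u v, is_derive (fun z => DF j (w z v)) u (D2 i j (w u v)).
  move=> u v; apply/is_derive_Reals; have := H2 i j (w u v); rewrite /pd wi.
  have -> : (fun y => DF j (setc (w u v) i y)) = (fun z => DF j (w z v)) by
    apply: functional_extensionality => y; rewrite si.
  by [].
have d4 : forall u v, is_derive (fun z => DF i (w u z)) v (D2 j i (w u v)).
  move=> u v; apply/is_derive_Reals; have := H2 j i (w u v); rewrite /pd wj.
  have -> : (fun y => DF i (setc (w u v) j y)) = (fun z => DF i (w u z)) by
    apply: functional_extensionality => y; rewrite sj.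
  by [].
have E1 : forall v, (fun z => Derive (fun t => f z t) v) = (fun z => DF j (w z v)).
  move=> v; apply: functional_extensionality => z; exact: is_derive_unique (d2 z v).
have E2 : forall u, (fun z => Derive (fun t => f t z) u) = (fun z => DF i (w u z)).
  move=> u; apply: functional_extensionality => z; exact: is_derive_unique (d1 u z).
have F1 : forall u v, Derive (fun z => Derive (fun t => f z t) v) u = D2 i j (w u v).
  by move=> u v; rewrite E1; exact: is_derive_unique (d3 u v).
have F2 : forall u v, Derive (fun z => Derive (fun t => f t z) u) v = D2 j i (w u v).
  by move=> u v; rewrite E2; exact: is_derive_unique (d4 u v).
have Hnear : forall u v d, Rabs (u - x i) < d -> Rabs (v - x j) < d -> near x (w u v) d.
  move=> u v d Hu Hv k; rewrite /w /setc.
  case: (k =P j) => [->|_] //; case: (k =P i) => [->|_] //.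
  rewrite Rminus_diag Rabs_R0; have := Rabs_pos (u - x i); lra.
have := @Schwarz f (x i) (x j).
rewrite F1 F2 wx; apply.
- exists (mkposreal 1 Rlt_0_1) => u v _ _; split; [|split; [|split]].
  + by exists (DF i (w u v)).
  + by exists (DF j (w u v)).
  + rewrite E1; by exists (D2 i j (w u v)).
  + rewrite E2; by exists (D2 j i (w u v)).
- move=> eps; have [d [Hd Hd']] := H3 i j x eps (cond_pos eps).
  exists (mkposreal d Hd) => u v Hu Hv; rewrite !F1 wx.
  exact: Hd' (Hnear u v d Hu Hv).
- move=> eps; have [d [Hd Hd']] := H3 j i x eps (cond_pos eps).
  exists (mkposreal d Hd) => u v Hu Hv; rewrite !F2 wx.
  exact: Hd' (Hnear u v d Hu Hv).
Qed.
End SchwarzAux.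

Definition lin n (a b : vec n) (th : R) : vec n := fun k => a k + th * (b k - a k).

Lemma lin0 n (a b : vec n) : lin a b 0 = a.
Proof. by apply: functional_extensionality => k; rewrite /lin; ring. Qed.

Lemma lin1 n (a b : vec n) : lin a b 1 = b.
Proof. by apply: functional_extensionality => k; rewrite /lin; ring. Qed.

Lemma lin_der n (a b : vec n) k th :
  derivable_pt_lim (fun u => lin a b u k) th (b k - a k).
Proof.
rewrite /lin.
apply: der_eq (derivable_pt_lim_plus (fun _ => a k) (fun u => u * (b k - a k)) th _ _
  (derivable_pt_lim_const _ _) (derivable_pt_lim_mult id (fun _ => b k - a k) th _ _
     (derivable_pt_lim_id th) (derivable_pt_lim_const _ _))) _.
rewrite /id; ring.
Qed.

Lemma der_mulc f x l c : derivable_pt_lim f x l -> derivable_pt_lim (fun y => f y * c) x (l * c).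
Proof.
move=> H; apply: der_eq (derivable_pt_lim_mult f (fun _ => c) x _ _ H (derivable_pt_lim_const _ _)) _.
ring.
Qed.

Lemma line_chain n (F : vec n -> R) (DF : 'I_n -> vec n -> R) (a b : vec n) th :
  (forall i x, pd F i x (DF i x)) ->
  (forall i x e, 0 < e -> exists d, 0 < d /\ forall y, near x y d -> Rabs (DF i y - DF i x) < e) ->
  derivable_pt_lim (fun u => F (lin a b u)) th
    (isum (fun j => DF j (lin a b th) * (b j - a j))).
Proof.
move=> H1 H2.
have := @chain n (fun y _ => F y) (fun j y _ => DF j y) (lin a b) (fun k => b k - a k) th 0 1
  Rlt_0_1 (fun j y s _ _ => H1 j y) (fun j => ct_fix th (H2 j (lin a b th)))
  (derivable_pt_lim_const _ _) (fun j => lin_der a b j th).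
by rewrite Rplus_0_r.
Qed.

Lemma conv_grad n (F : vec n -> R) (DF : 'I_n -> vec n -> R) :
  (forall i x, pd F i x (DF i x)) ->
  (forall i x e, 0 < e -> exists d, 0 < d /\ forall y, near x y d -> Rabs (DF i y - DF i x) < e) ->
  convex_fun F ->
  forall a b, isum (fun k => DF k a * (b k - a k)) <= F b - F a.
Proof.
move=> H1 H2 Hc a b.
have Hd := @line_chain n F DF a b 0 H1 H2; rewrite lin0 in Hd.
set L := isum _ in Hd *.
apply: Rnot_lt_le => Hlt.
have He : 0 < L - (F b - F a) by lra.
have [del Hdel] := Hd _ He.
have Hh : 0 < Rmin (del / 2) (1 / 2) by apply: Rmin_pos; [have := cond_pos del|]; lra.
set h := Rmin (del / 2) (1 / 2) in Hh.
have Hh1 : h <= 1 / 2 by apply: Rmin_r.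
have Hh2 : h <= del / 2 by apply: Rmin_l.
have Hdp := cond_pos del.
have := Hdel h ltac:(lra) ltac:(rewrite Rabs_right; lra).
rewrite Rplus_0_l lin0.
have Hcv : F (lin a b h) <= h * F b + (1 - h) * F a.
  have -> : lin a b h = (fun k => h * b k + (1 - h) * a k).
    by apply: functional_extensionality => k; rewrite /lin; ring.
  by apply: Hc; lra.
have : (F (lin a b h) - F a) / h <= F b - F a.
  apply: (Rmult_le_reg_r h) => //.
  have -> : (F (lin a b h) - F a) / h * h = F (lin a b h) - F a by field; lra.
  lra.
move=> A B.
have := Rabs_def2 _ _ B; lra.
Qed.

Lemma mono_grad n (F : vec n -> R) (DF : 'I_n -> vec n -> R) (D2 : 'I_n -> 'I_n -> vec n -> R) m :
  (forall i x, pd F i x (DF i x)) -> (forall i j x, pd (DF j) i x (D2 i j x)) ->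
  (forall i j x e, 0 < e -> exists d, 0 < d /\
      forall y, near x y d -> Rabs (D2 i j y - D2 i j x) < e) ->
  (forall x v, m * sqnorm v <= qform (fun i j => D2 i j x) v) ->
  forall a b, m * sqnorm (fun k => b k - a k) <=
              isum (fun k => (DF k b - DF k a) * (b k - a k)).
Proof.
move=> H1 H2 H3 Hm a b.
set d := fun k => b k - a k.
pose psi u := isum (fun k => DF k (lin a b u) * d k).
pose psi' u := isum (fun k => isum (fun j => D2 j k (lin a b u) * d j) * d k).
have Hder : forall u, derivable_pt_lim psi u (psi' u).
  move=> u; apply: isum_der => k; apply: der_mulc.
  exact: (@line_chain n (DF k) (fun j => D2 j k) a b u (fun j x => H2 j k x) (fun j => H3 j k)).
have [c [_ Ec]] := @mvt2 psi psi' 0 1 (fun c _ => Hder c).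
have E1 : psi 1 - psi 0 = isum (fun k => (DF k b - DF k a) * d k).
  rewrite /psi lin1 lin0 -isumB; apply: isum_ext => k; ring.
rewrite -E1 Ec Rminus_0_r Rmult_1_r.
apply: Rle_trans (Hm (lin a b c) d) _; right.
rewrite /psi' /qform isum_swap; apply: isum_ext => j; rewrite Rmult_comm -isum_scal.
apply: isum_ext => k; ring.
Qed.

Lemma der_cmul f x l c : derivable_pt_lim f x l -> derivable_pt_lim (fun y => c * f y) x (c * l).
Proof.
move=> H; apply: der_eq (derivable_pt_lim_mult (fun _ => c) f x _ _ (derivable_pt_lim_const _ _) H) _.
ring.
Qed.

Lemma isum_mulr n (f : 'I_n -> R) c : isum f * c = isum (fun i => f i * c).
Proof. rewrite Rmult_comm -isum_scal; apply: isum_ext => i; ring. Qed.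

Lemma near_setc n (x : vec n) i w d : 0 < d -> Rabs (w - x i) < d -> near x (setc x i w) d.
Proof.
move=> Hd Hw j; rewrite /setc; case: (j =P i) => [->|_] //.
rewrite Rminus_diag Rabs_R0 //.
Qed.

Lemma jc_fix n (F : vec n -> R -> R) t : jcont F -> 0 <= t ->
  forall x e, 0 < e -> exists d, 0 < d /\ forall y, near x y d -> Rabs (F y t - F x t) < e.
Proof.
move=> H Ht x e He; have [d [Hd Hd']] := H x t Ht e He; exists d; split => // y Hy.
apply: Hd' => //; rewrite Rminus_diag Rabs_R0 //.
Qed.

Lemma pd_Phi n p (f0 : vec n -> R) (fc : 'I_p -> vec n -> R) (DF0 : 'I_n -> vec n -> R)
  (DFc : 'I_p -> 'I_n -> vec n -> R) C Sv y k :
  pd f0 k y (DF0 k y) -> (forall i, pd (fc i) k y (DFc i k y)) -> (forall i, 0 < Sv - fc i y) ->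
  pd (fun y => f0 y - C * isum (fun i => ln (Sv - fc i y))) k y
     (DF0 k y + C * isum (fun i => DFc i k y / (Sv - fc i y))).
Proof.
move=> H0 Hc Hpos; rewrite /pd.
have Hi : forall i, derivable_pt_lim (fun w => ln (Sv - fc i (setc y k w))) (y k)
    (/ (Sv - fc i y) * (0 - DFc i k y)).
  move=> i.
  have A : derivable_pt_lim (fun w => Sv - fc i (setc y k w)) (y k) (0 - DFc i k y).
    exact: (derivable_pt_lim_minus (fun _ => Sv) (fun w => fc i (setc y k w)) (y k) _ _
      (derivable_pt_lim_const _ _) (Hc i)).
  have B : derivable_pt_lim ln ((fun w => Sv - fc i (setc y k w)) (y k)) (/ (Sv - fc i y)).
    rewrite /= setc_same; apply: derivable_pt_lim_ln; exact: Hpos.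
  exact: (derivable_pt_lim_comp _ ln _ _ _ A B).
have := derivable_pt_lim_minus _ _ _ _ _ H0 (der_cmul C (isum_der Hi)).
move=> HH; apply: der_eq HH _.
rewrite (isum_ext (fun i => / (Sv - fc i y) * (0 - DFc i k y))
                  (fun i => - (DFc i k y / (Sv - fc i y)))); last first.
  by move=> i; rewrite /Rdiv; ring.
rewrite isumN; ring.
Qed.

Lemma pd_gP n p (DF0k : vec n -> R) (D2F0jk : vec n -> R) (DFck DFcj fc : 'I_p -> vec n -> R)
  (D2Fcjk : 'I_p -> vec n -> R) C Sv y j :
  pd DF0k j y (D2F0jk y) -> (forall i, pd (DFck i) j y (D2Fcjk i y)) ->
  (forall i, pd (fc i) j y (DFcj i y)) -> (forall i, 0 < Sv - fc i y) ->
  pd (fun y => DF0k y + C * isum (fun i => DFck i y / (Sv - fc i y))) j y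
     (D2F0jk y + C * isum (fun i => (D2Fcjk i y * (Sv - fc i y) + DFck i y * DFcj i y)
                                   / ((Sv - fc i y) * (Sv - fc i y)))).
Proof.
move=> H0 Hk Hj Hpos; rewrite /pd.
have Hi : forall i, derivable_pt_lim (fun w => DFck i (setc y j w) / (Sv - fc i (setc y j w))) (y j)
    ((D2Fcjk i y * (Sv - fc i y) + DFck i y * DFcj i y) / ((Sv - fc i y) * (Sv - fc i y))).
  move=> i.
  have A : derivable_pt_lim (fun w => Sv - fc i (setc y j w)) (y j) (0 - DFcj i y).
    exact: (derivable_pt_lim_minus (fun _ => Sv) (fun w => fc i (setc y j w)) (y j) _ _
      (derivable_pt_lim_const _ _) (Hj i)).
  have Hnz : (fun w => Sv - fc i (setc y j w)) (y j) <> 0.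
    by rewrite /= setc_same; have := Hpos i; lra.
  have := derivable_pt_lim_div _ _ _ _ _ (Hk i) A Hnz.
  move=> HH; apply: der_eq HH _.
  rewrite /= setc_same /Rsqr; field.
  by have := Hpos i; lra.
exact: (derivable_pt_lim_plus _ _ _ _ _ H0 (der_cmul C (isum_der Hi))).
Qed.

Lemma ct_hP n p (A : vec n -> R -> R) (B Dk Dj fcf : 'I_p -> vec n -> R -> R) (Ci Sf : R -> R) x t :
  ctat A x t -> (forall i, ctat (B i) x t) -> (forall i, ctat (Dk i) x t) ->
  (forall i, ctat (Dj i) x t) -> (forall i, ctat (fcf i) x t) ->
  continuity_pt Ci t -> continuity_pt Sf t -> (forall i, Sf t - fcf i x t <> 0) ->
  ctat (fun y s => A y s + Ci s * isum (fun i => (B i y s * (Sf s - fcf i y s) + Dk i y s * Dj i y s)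
                                   / ((Sf s - fcf i y s) * (Sf s - fcf i y s)))) x t.
Proof.
move=> HA HB HDk HDj Hf HC HS Hnz.
apply: ct_plus => //; apply: ct_mult; first exact: ct_time.
apply: ct_isum => i.
have HQ : ctat (fun y s => Sf s - fcf i y s) x t.
  by apply: ct_plus; [apply: ct_time | apply: ct_opp].
have HQQ : ctat (fun y s => (Sf s - fcf i y s) * (Sf s - fcf i y s)) x t by apply: ct_mult.
apply: ct_mult; first by apply: ct_plus; apply: ct_mult.
apply: ct_inv => //.
by apply: Rmult_integral_contrapositive_currified; apply: Hnz.
Qed.

Lemma exp_small K a eta : 0 <= K -> 0 < a -> 0 < eta ->
  exists T, forall t, T <= t -> K * exp (- a * t) < eta.
Proof.
move=> HK Ha He.
exists (ln ((K + 1) / eta) / a) => t Ht.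
have H1 : ln ((K + 1) / eta) <= a * t.
  have := Rmult_le_compat_l a _ _ (Rlt_le _ _ Ha) Ht.
  have -> : a * (ln ((K + 1) / eta) / a) = ln ((K + 1) / eta) by field; lra.
  by [].
have H2 : exp (ln ((K + 1) / eta)) <= exp (a * t).
  case: (Rle_lt_or_eq_dec _ _ H1) => [h|h]; [left; exact: exp_increasing | by rewrite h; right].
rewrite exp_ln in H2; last by apply: Rdiv_lt_0_compat; lra.
have E : exp (- a * t) = / exp (a * t).
  by rewrite -exp_Ropp; congr exp; ring.
rewrite E.
have Hp := exp_pos (a * t).
apply: (Rmult_lt_reg_r (exp (a * t))) => //.
have -> : K * / exp (a * t) * exp (a * t) = K by field; lra.
have : (K + 1) / eta * eta <= exp (a * t) * eta by apply: Rmult_le_compat_r; lra.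
have -> : (K + 1) / eta * eta = K + 1 by field; lra.
nra.
Qed.

Lemma isum_swap2 n m (F : 'I_n -> 'I_m -> R) :
  isum (fun i => isum (fun j => F i j)) = isum (fun j => isum (fun i => F i j)).
Proof. by rewrite /isum exchange_big. Qed.

Lemma static n p (f0 : vec n -> R) (fc : 'I_p -> vec n -> R) (DF0 : 'I_n -> vec n -> R)
  (D2F0 : 'I_n -> 'I_n -> vec n -> R) (DFc : 'I_p -> 'I_n -> vec n -> R) m C Sv
  (lam : 'I_p -> R) (xs zt g : vec n) :
  0 < C -> 0 <= Sv ->
  (forall i x, pd f0 i x (DF0 i x)) -> (forall i j x, pd (DF0 j) i x (D2F0 i j x)) ->
  (forall i j x e, 0 < e -> exists d, 0 < d /\
      forall y, near x y d -> Rabs (D2F0 i j y - D2F0 i j x) < e) ->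
  (forall x v, m * sqnorm v <= qform (fun i j => D2F0 i j x) v) ->
  (forall i k x, pd (fc i) k x (DFc i k x)) ->
  (forall i k x e, 0 < e -> exists d, 0 < d /\
      forall y, near x y d -> Rabs (DFc i k y - DFc i k x) < e) ->
  (forall i, convex_fun (fc i)) ->
  (forall k, DF0 k xs + isum (fun i => lam i * DFc i k xs) = 0) ->
  (forall i, lam i * fc i xs = 0) -> (forall i, 0 <= lam i) -> (forall i, fc i xs <= 0) ->
  (forall i, fc i zt < Sv) ->
  (forall k, g k = DF0 k zt + C * isum (fun i => DFc i k zt / (Sv - fc i zt))) ->
  m * sqnorm (fun k => zt k - xs k) <=
    isum (fun k => g k * (zt k - xs k)) + INR p * C + Sv * isum lam.
Proof.
move=> HC HS H1 H2 H3 Hm Hc1 Hc2 Hconv Hk Hcs Hlam Hfeas Hz Hg.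
set d := fun k => zt k - xs k.
have Ha := mono_grad H1 H2 H3 Hm xs zt.
rewrite -/d in Ha.
set Q := fun i => Sv - fc i zt.
have HQ : forall i, 0 < Q i by move=> i; rewrite /Q; have := Hz i; lra.
have E1 : forall k, (DF0 k zt - DF0 k xs) * d k =
    g k * d k - C * isum (fun i => DFc i k zt / Q i * d k)
    + isum (fun i => lam i * DFc i k xs * d k).
  move=> k; rewrite -!isum_mulr Hg.
  have -> : DF0 k xs = - isum (fun i => lam i * DFc i k xs) by have := Hk k; lra.
  rewrite /Q; ring.
rewrite (isum_ext _ _ E1) isumD isumB isum_scal
  (isum_swap2 (fun k i => DFc i k zt / Q i * d k))
  (isum_swap2 (fun k i => lam i * DFc i k xs * d k)) in Ha.
have B1 : forall i, - isum (fun k => DFc i k zt / Q i * d k) <= 1.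
  move=> i.
  have -> : isum (fun k => DFc i k zt / Q i * d k) = isum (fun k => DFc i k zt * d k) * / Q i.
    rewrite isum_mulr; apply: isum_ext => k; rewrite /Rdiv; ring.
  have HA := @conv_grad n (fc i) (DFc i) (Hc1 i) (Hc2 i) (Hconv i) zt xs.
  rewrite (isum_ext _ (fun k => - (DFc i k zt * d k))) in HA; last first.
    by move=> k; rewrite /d; ring.
  rewrite isumN in HA.
  set A := isum (fun k => DFc i k zt * d k) in HA *.
  have HQi := HQ i.
  have : - A <= Q i by rewrite /Q; have := Hfeas i; lra.
  move=> HAQ.
  have -> : - (A * / Q i) = (- A) / Q i by rewrite /Rdiv; ring.
  apply: (Rmult_le_reg_r (Q i)) => //.
  have -> : - A / Q i * Q i = - A by field; lra.
  lra.
have B2 : forall i, isum (fun k => lam i * DFc i k xs * d k) <= Sv * lam i.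
  move=> i.
  have -> : isum (fun k => lam i * DFc i k xs * d k) = lam i * isum (fun k => DFc i k xs * d k).
    rewrite -isum_scal; apply: isum_ext => k; ring.
  have HB := @conv_grad n (fc i) (DFc i) (Hc1 i) (Hc2 i) (Hconv i) xs zt.
  have HB' : isum (fun k => DFc i k xs * d k) <= fc i zt - fc i xs by exact: HB.
  have := Rmult_le_compat_l (lam i) _ _ (Hlam i) HB'.
  have := Rmult_le_compat_l (lam i) _ _ (Hlam i) (Rlt_le _ _ (Hz i)).
  have := Hcs i; lra.
have S1 : isum (fun i => - isum (fun k => DFc i k zt / Q i * d k)) <= INR p.
  have := isum_le _ _ B1; rewrite isum_const; lra.
have S2 : isum (fun i => isum (fun k => lam i * DFc i k xs * d k)) <= Sv * isum lam.
  have := isum_le _ _ B2; rewrite -isum_scal; lra.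
rewrite isumN in S1.
have : C * (- isum (fun i => isum (fun k => DFc i k zt / Q i * d k))) <= C * INR p.
  apply: Rmult_le_compat_l; lra.
have -> : isum (fun k => g k * (zt k - xs k)) = isum (fun i => g i * d i) by [].
lra.
Qed.

Unset Implicit Arguments.
From Stdlib Require Import Classical.

Theorem theorem1 (n p : nat)
  (f0 : vec n -> R -> R) (fc : 'I_p -> vec n -> R -> R)
  (* Assumption 1 *)
  (H1a : C2x_C1t f0) (H1b : forall i, C2x_C1t (fc i))
  (m : R) (Hm : 0 < m)
  (Hstrong : forall t x H, 0 <= t -> hess (fun y => f0 y t) x H ->
     forall v, m * sqnorm v <= qform H v)
  (Hconv : forall i t, 0 <= t -> convex_fun (fun y => fc i y t))
  (* Assumption 2 (Slater) *)
  (Hslater : exists xd : vec n, forall i t, 0 <= t -> fc i xd t < 0)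
  (* the optimal trajectory *)
  (xstar : R -> vec n)
  (Hxstar : forall t, 0 <= t -> is_argmin f0 fc t (xstar t))
  (* KKT multipliers and Assumption 3 *)
  (HKKT : exists lam : R -> 'I_p -> R,
     (forall t, 0 <= t ->
        exists (g0 : vec n) (gs : 'I_p -> vec n),
          grad (fun y => f0 y t) (xstar t) g0 /\
          (forall i, grad (fun y => fc i y t) (xstar t) (gs i)) /\
          (forall k, g0 k + isum (fun i => lam t i * gs i k) = 0) /\
          (forall i, lam t i * fc i (xstar t) t = 0) /\
          (forall i, 0 <= lam t i) /\
          (forall i, fc i (xstar t) t <= 0)) /\
     (forall a, 0 < a -> forall i e, 0 < e -> exists T, forall t, T <= t ->
        Rabs (lam t i * exp (- a * t)) < e))
  (* initial point, slack s(t) *)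
  (x0 : vec n) (eps : R) (Heps : 0 < eps) (s0 : R)
  (Hs0a : (forall i, fc i x0 0 <= 0) -> s0 = 0)
  (Hs0b : (exists i, 0 < fc i x0 0) ->
     exists i, (forall j, fc j x0 0 <= fc i x0 0) /\ s0 = fc i x0 0 + eps)
  (alpha : R) (Halpha : 0 < alpha)
  (* barrier parameter c *)
  (c : R -> R) (Hcpos : forall t, 0 <= t -> 0 < c t)
  (Hc1 : exists c' : R -> R,
     (forall t, 0 < t -> derivable_pt_lim c t (c' t)) /\
     (forall t, 0 <= t -> forall e, 0 < e -> exists d, 0 < d /\
        forall u, 0 <= u -> Rabs (u - t) < d -> Rabs (c' u - c' t) < e))
  (Hcinf : forall M, exists T, forall t, T <= t -> M < c t)
  (* gain matrix P *)
  (P : 'I_n -> 'I_n -> R) (Psym : forall i j, P i j = P j i)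
  (sigma : R) (Hsigma : 0 < sigma)
  (HP : forall v, sigma * sqnorm v <= qform P v)
  (* the trajectory z~ *)
  (z : R -> vec n)
  (Hz0 : forall i, z 0 i = x0 i)
  (Hzcont0 : forall i e, 0 < e -> exists d, 0 < d /\
     forall t, 0 <= t < d -> Rabs (z t i - x0 i) < e)
  (HzD : forall t, 0 <= t -> forall i,
     fc i (z t) t < s0 * exp (- alpha * t))
  (Hode : forall t, 0 < t ->
     exists (zd g m' : vec n) (H : 'I_n -> 'I_n -> R),
       (forall i, derivable_pt_lim (fun u => z u i) t (zd i)) /\
       grad (fun y => Phit f0 fc c (fun u => s0 * exp (- alpha * u)) y t) (z t) g /\
       hess (fun y => Phit f0 fc c (fun u => s0 * exp (- alpha * u)) y t) (z t) H /\
       dxt (Phit f0 fc c (fun u => s0 * exp (- alpha * u))) (z t) t m' /\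
       (forall i, isum (fun j => H i j * zd j)
                  = - (isum (fun j => P i j * g j) + m' i))) :
  forall e, 0 < e -> exists T, forall t, T <= t -> forall i,
    Rabs (z t i - xstar t i) < e.
Proof.
move=> e He.
have [DF0 [D2F0 [Dt0 [P0 [P20 [_ [_ [jD0 [jD20 _]]]]]]]]] := H1a.
pose Rel := fun (i : 'I_p)
   (q : ('I_n -> vec n -> R -> R) * ('I_n -> 'I_n -> vec n -> R -> R)) =>
   (forall x t k, 0 <= t -> pd (fun y => fc i y t) k x (q.1 k x t)) /\
   (forall x t k j, 0 <= t -> pd (fun y => q.1 j y t) k x (q.2 k j x t)) /\
   jcont (fc i) /\ (forall k, jcont (q.1 k)) /\ (forall k j, jcont (q.2 k j)).
have Hex : forall i, exists q, Rel i q.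
  move=> i; have [A [B [Cc [h1 [h2 [_ [h4 [h5 [h6 _]]]]]]]]] := H1b i.
  by exists (A, B).
have [DD HDD] := functional_choice Rel Hex.
pose DFc i := (DD i).1.
pose D2Fc i := (DD i).2.
have Pc : forall i x t k, 0 <= t -> pd (fun y => fc i y t) k x (DFc i k x t).
  by move=> i; have [h _] := HDD i.
have P2c : forall i x t k j, 0 <= t -> pd (fun y => DFc i j y t) k x (D2Fc i k j x t).
  by move=> i; have [_ [h _]] := HDD i.
have jc : forall i, jcont (fc i) by move=> i; have [_ [_ [h _]]] := HDD i.
have jDc : forall i k, jcont (DFc i k) by move=> i; have [_ [_ [_ [h _]]]] := HDD i.
have jD2c : forall i k j, jcont (D2Fc i k j) by move=> i; have [_ [_ [_ [_ h]]]] := HDD i.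
have [lam [HK1 HK2]] := HKKT.
have Hs0 : 0 <= s0.
  case: (classic (forall i, fc i x0 0 <= 0)) => [H|H]; first by rewrite (Hs0a H); lra.
  have [i Hi] := not_all_ex_not _ _ H.
  have Hi' := Rnot_le_lt _ _ Hi.
  have [j [Hj ->]] := Hs0b (ex_intro _ i Hi').
  have := Hj i; lra.
pose S u := s0 * exp (- alpha * u).
have HSnn : forall u, 0 <= S u.
  by move=> u; rewrite /S; have := exp_pos (- alpha * u); nra.
have HScont : forall u, continuity_pt S u.
  move=> u.
  have Hl : derivable_pt_lim (fun u => - alpha * u) u (- alpha * 1).
    exact: der_cmul (derivable_pt_lim_id u).
  have Hc := derivable_pt_lim_comp _ exp _ _ _ Hl (derivable_pt_lim_exp _).
  exact: der_cont (der_cmul s0 Hc).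
have [c' [Hc'd _]] := Hc1.
have Hccont : forall u, 0 < u -> continuity_pt c u by move=> u Hu; exact: der_cont (Hc'd u Hu).
have sym0 : forall t, 0 <= t -> forall i j y, D2F0 i j y t = D2F0 j i y t.
  move=> t Ht i j y.
  exact: (@SchwarzAux.sym n (fun y => f0 y t) (fun k y => DF0 k y t)
    (fun i j y => D2F0 i j y t) (fun i x => P0 x t i Ht) (fun i j x => P20 x t i j Ht)
    (fun i j x => jc_fix (jD20 i j) Ht x) i j y).
have symc : forall i t, 0 <= t -> forall k j y, D2Fc i k j y t = D2Fc i j k y t.
  move=> i t Ht k j y.
  exact: (@SchwarzAux.sym n (fun y => fc i y t) (fun k y => DFc i k y t)
    (fun k j y => D2Fc i k j y t) (fun k x => Pc i x t k Ht) (fun k j x => P2c i x t k j Ht)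
    (fun k j x => jc_fix (jD2c i k j) Ht x) k j y).
pose gP k y u := DF0 k y u + / c u * isum (fun i => DFc i k y u / (S u - fc i y u)).
pose hP j k y u := D2F0 j k y u + / c u * isum (fun i =>
   (D2Fc i j k y u * (S u - fc i y u) + DFc i k y u * DFc i j y u)
     / ((S u - fc i y u) * (S u - fc i y u))).
have pdPhi : forall u y k, 0 <= u -> (forall i, 0 < S u - fc i y u) ->
    pd (fun y => Phit f0 fc c S y u) k y (gP k y u).
  move=> u y k Hu Hpos.
  exact: (@pd_Phi n p (fun y => f0 y u) (fun i y => fc i y u) (fun k y => DF0 k y u)
    (fun i k y => DFc i k y u) (/ c u) (S u) y k (P0 y u k Hu) (fun i => Pc i y u k Hu) Hpos).
have pdgP : forall u y j k, 0 <= u -> (forall i, 0 < S u - fc i y u) ->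
    pd (fun y => gP k y u) j y (hP j k y u).
  move=> u y j k Hu Hpos.
  exact: (@pd_gP n p (fun y => DF0 k y u) (fun y => D2F0 j k y u) (fun i y => DFc i k y u)
    (fun i y => DFc i j y u) (fun i y => fc i y u) (fun i y => D2Fc i j k y u) (/ c u) (S u) y j
    (P20 y u j k Hu) (fun i => P2c i y u j k Hu) (fun i => Pc i y u j Hu) Hpos).
have hPsym : forall u, 0 <= u -> forall j k y, hP j k y u = hP k j y u.
  move=> u Hu j k y; rewrite /hP (sym0 u Hu j k y).
  rewrite (isum_ext _ (fun i => (D2Fc i k j y u * (S u - fc i y u) + DFc i j y u * DFc i k y u)
     / ((S u - fc i y u) * (S u - fc i y u)))) //.
  by move=> i; rewrite (symc i u Hu j k y) /Rdiv; ring.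
pose gg k u := gP k (z u) u.
have Gder : forall u, 0 < u -> forall k,
    derivable_pt_lim (fun v => gg k v) u (- isum (fun j => P k j * gg j u)).
  move=> u Hu k.
  have Hu0 : 0 <= u by lra.
  have Hcu : 0 < c u by apply: Hcpos.
  have Hzpos : forall i, 0 < S u - fc i (z u) u by move=> i; have := HzD u Hu0 i; rewrite /S; lra.
  have [dp [Hdp Hposn]] : exists d, 0 < d /\ forall i y s, near (z u) y d ->
      Rabs (s - u) < d -> 0 < S s - fc i y s.
    apply: (fin_delta (fun i d => forall y s, near (z u) y d -> Rabs (s - u) < d ->
       0 < S s - fc i y s)).
    - move=> i d d' Hdd H y s Hy Hs; apply: H; [apply: near_le Hy; lra | lra].
    - move=> i.
      have HQ : ctat (fun y s => S s - fc i y s) (z u) u.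
        apply: ct_plus; [exact: ct_time | apply: ct_opp; exact: ct_jc].
      have [d [Hd Hd']] := HQ _ (Hzpos i).
      exists d; split => // y s Hy Hs.
      have := Rabs_def2 _ _ (Hd' y s Hy Hs); lra.
  set d0 := Rmin dp u.
  have Hd0 : 0 < d0 by apply: Rmin_pos.
  have Hin : forall y s, near (z u) y d0 -> Rabs (s - u) < d0 ->
      0 < s /\ (forall i, 0 < S s - fc i y s).
    move=> y s Hy Hs; split.
      have := Rabs_def2 _ _ (Rlt_le_trans _ _ _ Hs (Rmin_r dp u)); lra.
    move=> i; apply: Hposn; [apply: near_le Hy; apply: Rmin_l | ].
    exact: Rlt_le_trans Hs (Rmin_l _ _).
  have [zd [g [m' [H [Hzd [Hg [Hh [Hm' Hodeq]]]]]]]] := Hode u Hu.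
  have Eg : forall j, g j = gg j u.
    move=> j; exact: (uniqueness_limite _ _ _ _ (Hg j) (pdPhi u (z u) j Hu0 Hzpos)).
  have EH : forall i j, H i j = hP i j (z u) u.
    have [DF [dd [Hdd [HDF HH]]]] := Hh.
    move=> i j.
    have Hdm : 0 < Rmin dd d0 by apply: Rmin_pos.
    have L : derivable_pt_lim (fun w => gP j (setc (z u) i w) u) (z u i) (H i j).
      apply: (der_local Hdm _ (HH i j)).
      move=> w Hw.
      have Hn := near_setc Hdm Hw.
      have Hn1 : near (z u) (setc (z u) i w) dd by apply: near_le Hn; apply: Rmin_l.
      have Hn2 : near (z u) (setc (z u) i w) d0 by apply: near_le Hn; apply: Rmin_r.
      have [_ Hp] := Hin _ u Hn2 ltac:(rewrite Rminus_diag Rabs_R0; lra).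
      exact: (uniqueness_limite _ _ _ _ (HDF j _ Hn1) (pdPhi u _ j Hu0 Hp)).
    exact: (uniqueness_limite _ _ _ _ L (pdgP u (z u) i j Hu0 Hzpos)).
  have Em : derivable_pt_lim (fun s => gP k (z u) s) u (m' k).
    have [G [dd [Hdd [HG HGd]]]] := Hm'.
    have Hdm : 0 < Rmin dd d0 by apply: Rmin_pos.
    apply: (der_local Hdm _ (HGd k)).
    move=> s Hs.
    have Hs1 : Rabs (s - u) < dd by apply: Rlt_le_trans Hs (Rmin_l _ _).
    have Hs2 : Rabs (s - u) < d0 by apply: Rlt_le_trans Hs (Rmin_r _ _).
    have [Hsp Hp] := Hin _ s (near_refl _ Hd0) Hs2.
    exact: (uniqueness_limite _ _ _ _ (HG k s Hs1) (pdPhi s _ k (Rlt_le _ _ Hsp) Hp)).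
  have Hct : forall j, ctat (fun y s => hP j k y s) (z u) u.
    move=> j.
    exact: (@ct_hP n p (D2F0 j k) (fun i => D2Fc i j k) (fun i => DFc i k) (fun i => DFc i j) fc
      (fun s => / c s) S (z u) u (ct_jc _ (jD20 j k) Hu) (fun i => ct_jc _ (jD2c i j k) Hu)
      (fun i => ct_jc _ (jDc i k) Hu) (fun i => ct_jc _ (jDc i j) Hu) (fun i => ct_jc _ (jc i) Hu)
      (continuity_pt_inv _ _ (Hccont u Hu) ltac:(lra)) (HScont u)
      (fun i => ltac:(have := Hzpos i; lra))).
  have Hch := @chain n (fun y s => gP k y s) (fun j y s => hP j k y s) z zd u (m' k) d0 Hd0
    (fun j y s Hy Hs => pdgP s y j k (Rlt_le _ _ (proj1 (Hin y s Hy Hs))) (proj2 (Hin y s Hy Hs)))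
    Hct Em Hzd.
  apply: der_eq Hch _.
  rewrite (isum_ext (fun j => hP j k (z u) u * zd j) (fun j => H k j * zd j)); last first.
    by move=> j; rewrite EH hPsym.
  rewrite Hodeq (isum_ext (fun j => P k j * g j) (fun j => P k j * gg j u)); last first.
    by move=> j; rewrite Eg.
  ring.
pose V u := isum (fun k => gg k u * gg k u).
have HV0 : forall u, 0 <= V u.
  by move=> u; apply: isum_ge0 => k; apply: Rle_0_sqr.
have Vder : forall u, 0 < u -> derivable_pt_lim V u (-2 * qform P (fun j => gg j u)).
  move=> u Hu.
  have Hk : forall k, derivable_pt_lim (fun v => gg k v * gg k v) u
      (2 * gg k u * - isum (fun j => P k j * gg j u)).
    move=> k; apply: der_eq (derivable_pt_lim_mult _ _ _ _ _ (Gder u Hu k) (Gder u Hu k)) _.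
    ring.
  apply: der_eq (isum_der Hk) _.
  rewrite /qform -isum_scal; apply: isum_ext => k.
  have -> : isum (fun j => gg k u * P k j * gg j u) = gg k u * isum (fun j => P k j * gg j u).
    by rewrite -isum_scal; apply: isum_ext => j; ring.
  ring.
pose E2 u := exp (2 * sigma * u).
have E2der : forall u, derivable_pt_lim E2 u (E2 u * (2 * sigma * 1)).
  move=> u.
  have Hl : derivable_pt_lim (fun u => 2 * sigma * u) u (2 * sigma * 1).
    exact: der_cmul (derivable_pt_lim_id u).
  exact: (derivable_pt_lim_comp _ exp _ _ _ Hl (derivable_pt_lim_exp _)).
pose W u := V u * E2 u.
pose W' u := -2 * qform P (fun j => gg j u) * E2 u + V u * (E2 u * (2 * sigma * 1)).
have Wder : forall u, 0 < u -> derivable_pt_lim W u (W' u).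
  move=> u Hu; exact: (derivable_pt_lim_mult _ _ _ _ _ (Vder u Hu) (E2der u)).
have W'neg : forall u, W' u <= 0.
  move=> u; rewrite /W'.
  have HE := exp_pos (2 * sigma * u).
  have Hq : sigma * V u <= qform P (fun j => gg j u) := HP (fun j => gg j u).
  rewrite /E2; nra.
have Wmono : forall u, 1 <= u -> W u <= W 1.
  move=> u Hu.
  have [c0 [Hc0 Ec]] := @mvt2 W W' 1 u (fun c Hc => Wder c ltac:(
     have := Rmin_l 1 u; have := Rmin_r 1 u; rewrite Rmin_left in Hc; lra)).
  have := W'neg c0.
  have : 0 <= u - 1 by lra.
  nra.
have Vbound : forall u, 1 <= u -> V u <= W 1 * exp (- (2 * sigma) * u).
  move=> u Hu.
  have E : V u = W u * exp (- (2 * sigma) * u).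
    rewrite /W /E2 Rmult_assoc -exp_plus.
    have -> : 2 * sigma * u + - (2 * sigma) * u = 0 by ring.
    by rewrite exp_0 Rmult_1_r.
  rewrite E; apply: Rmult_le_compat_r; [left; apply: exp_pos | exact: Wmono].
have Stat : forall t, 0 <= t ->
    m / 2 * sqnorm (fun k => z t k - xstar t k) <=
      V t / (2 * m) + INR p * / c t + S t * isum (lam t).
  move=> t Ht.
  have [g0 [gs [Hg0 [Hgs [Hsum [Hcs [Hlam Hfeas]]]]]]] := HK1 t Ht.
  have Eg0 : forall k, g0 k = DF0 k (xstar t) t.
    by move=> k; exact: (uniqueness_limite _ _ _ _ (Hg0 k) (P0 (xstar t) t k Ht)).
  have Egs : forall i k, gs i k = DFc i k (xstar t) t.
    by move=> i k; exact: (uniqueness_limite _ _ _ _ (Hgs i k) (Pc i (xstar t) t k Ht)).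
  have Hkkt : forall k, DF0 k (xstar t) t + isum (fun i => lam t i * DFc i k (xstar t) t) = 0.
    move=> k; rewrite -Eg0 -(Hsum k); congr (_ + _); apply: isum_ext => i; by rewrite Egs.
  have Hhb : forall x v, m * sqnorm v <= qform (fun i j => D2F0 i j x t) v.
    move=> x v; apply: (Hstrong t x _ Ht) => //.
    exists (fun j y => DF0 j y t), 1; split; first lra.
    split; [move=> j y _; exact: P0 | move=> i j; exact: P20].
  have HCt : 0 < / c t by apply: Rinv_0_lt_compat; apply: Hcpos.
  have Hst := @static n p (fun y => f0 y t) (fun i y => fc i y t) (fun k y => DF0 k y t)
    (fun i j y => D2F0 i j y t) (fun i k y => DFc i k y t) m (/ c t) (S t) (lam t)
    (xstar t) (z t) (fun k => gg k t) HCt (HSnn t) (fun i x => P0 x t i Ht)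
    (fun i j x => P20 x t i j Ht) (fun i j x => jc_fix (jD20 i j) Ht x) Hhb
    (fun i k x => Pc i x t k Ht) (fun i k x => jc_fix (jDc i k) Ht x) (fun i => Hconv i t Ht)
    Hkkt Hcs Hlam Hfeas (fun i => HzD t Ht i) (fun k => erefl).
  set d := fun k => z t k - xstar t k in Hst *.
  have Hy : isum (fun k => gg k t * d k) <= V t / (2 * m) + m / 2 * sqnorm d.
    have -> : V t / (2 * m) + m / 2 * sqnorm d =
              isum (fun k => gg k t * gg k t / (2 * m) + m / 2 * (d k * d k)).
      rewrite isumD isum_scal /V /sqnorm /Rdiv isum_mulr; by [].
    apply: isum_le => k.
    have key : gg k t * d k * (2 * m) <= gg k t * gg k t + m * m * (d k * d k).
      have := Rle_0_sqr (gg k t - m * d k); rewrite /Rsqr; nra.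
    have -> : gg k t * gg k t / (2 * m) + m / 2 * (d k * d k) =
              (gg k t * gg k t + m * m * (d k * d k)) / (2 * m) by field; lra.
    apply: (Rmult_le_reg_r (2 * m)); first lra.
    have -> : (gg k t * gg k t + m * m * (d k * d k)) / (2 * m) * (2 * m) =
              gg k t * gg k t + m * m * (d k * d k) by field; lra.
    exact: key.
  have Hst' : m * sqnorm d <= isum (fun k => gg k t * d k) + INR p * / c t
                               + S t * isum (lam t) := Hst.
  lra.
have Hm2 : 0 < 2 * m by lra.
set eta := m * (e * e) / 6.
have Heta : 0 < eta by rewrite /eta; have := Rmult_lt_0_compat _ _ He He; nra.
have HW1 : 0 <= W 1 / (2 * m).
  rewrite /W /E2 /Rdiv; apply: Rmult_le_pos; last by left; apply: Rinv_0_lt_compat.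
  apply: Rmult_le_pos; [exact: HV0 | left; apply: exp_pos].
have [T1 HT1] := exp_small HW1 (ltac:(lra) : 0 < 2 * sigma) Heta.
have [T2 HT2] := Hcinf (INR p / eta).
have Hp1 : 0 < INR p + 1 by have := pos_INR p; lra.
have Hq : 0 < eta / ((INR p + 1) * (s0 + 1)).
  apply: Rdiv_lt_0_compat => //; apply: Rmult_lt_0_compat; lra.
have [T3 HT3] := fin_T (fun i T => forall t, T <= t ->
    Rabs (lam t i * exp (- alpha * t)) < eta / ((INR p + 1) * (s0 + 1)))
  (fun i T T' HTT H t Ht => H t ltac:(lra))
  (fun i => HK2 alpha Halpha i _ Hq).
exists (Rmax 1 (Rmax T1 (Rmax T2 T3))) => t Ht i.
have Ht1 : 1 <= t by apply: Rle_trans (Rmax_l _ _) Ht.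
have HtR : Rmax T1 (Rmax T2 T3) <= t by apply: Rle_trans (Rmax_r _ _) Ht.
have HtT1 : T1 <= t by apply: Rle_trans (Rmax_l _ _) HtR.
have HtR2 : Rmax T2 T3 <= t by apply: Rle_trans (Rmax_r _ _) HtR.
have HtT2 : T2 <= t by apply: Rle_trans (Rmax_l _ _) HtR2.
have HtT3 : T3 <= t by apply: Rle_trans (Rmax_r _ _) HtR2.
have Ht0 : 0 <= t by lra.
have Hct : 0 < c t by apply: Hcpos.
have A1 : V t / (2 * m) < eta.
  apply: Rle_lt_trans (_ : _ <= W 1 / (2 * m) * exp (- (2 * sigma) * t)) (HT1 t HtT1).
  have -> : W 1 / (2 * m) * exp (- (2 * sigma) * t) = W 1 * exp (- (2 * sigma) * t) / (2 * m).
    by rewrite /Rdiv; ring.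
  rewrite /Rdiv; apply: Rmult_le_compat_r; [left; apply: Rinv_0_lt_compat; lra|].
  exact: Vbound.
have A2 : INR p * / c t < eta.
  have H2 := HT2 t HtT2.
  have : INR p / eta * eta < c t * eta by apply: Rmult_lt_compat_r.
  have -> : INR p / eta * eta = INR p by field; lra.
  move=> H3.
  apply: (Rmult_lt_reg_r (c t)) => //.
  have -> : INR p * / c t * c t = INR p by field; lra.
  lra.
have E3 : S t * isum (lam t) = s0 * isum (fun i => lam t i * exp (- alpha * t)).
  by rewrite /S -isum_mulr; ring.
have A3 : S t * isum (lam t) <= s0 * (INR p * (eta / ((INR p + 1) * (s0 + 1)))).
  rewrite E3; apply: Rmult_le_compat_l => //.
  apply: Rle_trans (Rle_abs _) _; apply: Rle_trans (Rabs_isum _) _.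
  rewrite -isum_const; apply: isum_le => j; left; exact: HT3.
have A3' : s0 * (INR p * (eta / ((INR p + 1) * (s0 + 1)))) < eta.
  have -> : s0 * (INR p * (eta / ((INR p + 1) * (s0 + 1)))) =
            eta * (s0 * INR p) / ((INR p + 1) * (s0 + 1)) by field; lra.
  have Hden : 0 < (INR p + 1) * (s0 + 1) by apply: Rmult_lt_0_compat; lra.
  apply: (Rmult_lt_reg_r ((INR p + 1) * (s0 + 1))) => //.
  have -> : eta * (s0 * INR p) / ((INR p + 1) * (s0 + 1)) * ((INR p + 1) * (s0 + 1)) =
            eta * (s0 * INR p) by field; lra.
  have := pos_INR p; nra.
have Hmain := Stat t Ht0.
set d := fun k => z t k - xstar t k in Hmain.
have Hsq : sqnorm d < e * e.
  apply: (Rmult_lt_reg_l (m / 2)); first lra.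
  have : m / 2 * (e * e) = 3 * eta by rewrite /eta; field.
  lra.
have Hdi : d i * d i <= sqnorm d.
  exact: (isum_single (fun k => d k * d k) i (fun j => Rle_0_sqr _)).
apply: Rnot_le_lt => Hc.
have Hc' : e <= Rabs (d i) := Hc.
have : e * e <= Rabs (d i) * Rabs (d i) by apply: Rmult_le_compat; lra.
rewrite -Rabs_mult Rabs_right; last by apply: Rle_ge; apply: Rle_0_sqr.
lra.
Qed.
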